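(* Under Assumptions A1–A4, the core Two-Tailed Averaging algorithm has infinitely many switch points: for every evaluation step $n$ there exists a switch point $n_s\ge n$.
   Context: Let $\Theta=\mathbb{R}^d$, let $(\theta_t)_{t\in\mathbb{N}_0}$ be a sequence in $\Theta$, let $f\colon\Theta\to\mathbb{R}$ be a loss function, and let $E\in\mathbb{N}$ be the evaluation period. Evaluation steps are the multiples of $E$. For integers $t\ge \Delta\ge 1$ write $\mathrm{avg}(t,\Delta)=\frac{1}{\Delta}\sum_{i=t+1-\Delta}^{t}\theta_i$; set $f(\mathrm{avg}(t,0))=+\infty$. Core Two-Tailed Averaging: it maintains integers $S,L$ and vectors $\theta^S,\theta^L$, initially $S=L=0$, $\theta^S=\theta^L=0$. For $t=1,2,\dots$: first $\theta_t$ is added to both averages, i.e. $\theta^S\leftarrow\theta^S+(\theta_t-\theta^S)/(S+1)$, $S\leftarrow S+1$, and $\theta^L\leftarrow\theta^L+(\theta_t-\theta^L)/(L+1)$, $L\leftarrow L+1$ (so $\theta^S=\mathrm{avg}(t,S)$, $\theta^L=\mathrm{avg}(t,L)$). Then, if $E$ divides $t$: if $f(\theta^S)\le f(\theta^L)$, a switch is performed: $L\leftarrow S$, $\theta^L\leftarrow\theta^S$, $S\leftarrow 0$. A time step $n$ is a switch point if a switch is performed at $t=n$. Optimal length: for $t\ge1$, $\mathcal{O}(t)$ is a (fixed) minimizer of $\Delta\mapsto f(\mathrm{avg}(t,\Delta))$ over $\Delta\in\{1,\dots,t\}$; $\mathcal{O}_E(n)=\lfloor \mathcal{O}(n)/E\rfloor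 E$ and $\mathcal{O}^E(n)=\lceil \mathcal{O}(n)/E\rceil E$. Assumptions (for all evaluation steps $n\ge E$): A1: $\Delta\mapsto f(\mathrm{avg}(n,\Delta))$ is strictly decreasing on $\Delta\in\{0,E,2E,\dots,\mathcal{O}_E(n)\}$. A2: for every integer $n_+$ with $\mathcal{O}^E(n)\le n_+\le n$, $f(\mathrm{avg}(n,\mathcal{O}^E(n)))\le f(\mathrm{avg}(n,n_+))$. A3: there exists a positive multiple $n_s$ of $E$ with $\mathcal{O}(n+n_s)-\mathcal{O}(n)<n_s$. A4: $\mathcal{O}(n)\le\mathcal{O}(n+E)$. *)

(* Defs.v *)
From HB Require Import structures.
From mathcomp Require Import all_boot all_order all_algebra.
From mathcomp Require Import reals constructive_ereal.
Set Implicit Arguments. Unset Strict Implicit. Unset Printing Implicit Defensive.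
Import Order.TTheory GRing.Theory Num.Theory.
Local Open Scope ring_scope.

Section TTA.
Variables (R : realType) (d : nat).
Notation Theta := 'rV[R]_d.

Definition avg (theta : nat -> Theta) (t D : nat) : Theta :=
  (D%:R)^-1 *: \sum_(t.+1 - D <= i < t.+1) theta i.

Definition favg (f : Theta -> R) (theta : nat -> Theta) (t D : nat) : \bar R :=
  if D == 0%N then +oo%E else (f (avg theta t D))%:E.

Record tta_state := TTAState {
  stS : nat; stL : nat; stThS : Theta; stThL : Theta }.

Definition tta_init : tta_state := TTAState 0 0 0 0.

Definition tta_add (x : Theta) (st : tta_state) : tta_state :=
  TTAState (stS st).+1 (stL st).+1
    (stThS st + ((stS st).+1%:R)^-1 *: (x - stThS st))
    (stThL st + ((stL st).+1%:R)^-1 *: (x - stThL st)).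

Definition tta_switches (E : nat) (f : Theta -> R) (t : nat) (st : tta_state) : bool :=
  (E %| t)%N && (f (stThS st) <= f (stThL st)).

Definition tta_step (E : nat) (f : Theta -> R) (theta : nat -> Theta)
    (t : nat) (st : tta_state) : tta_state :=
  let st' := tta_add (theta t) st in
  if tta_switches E f t st' then TTAState 0 (stS st') (stThS st') (stThS st')
  else st'.

Fixpoint tta_state_at (E : nat) (f : Theta -> R) (theta : nat -> Theta)
    (t : nat) : tta_state :=
  match t with
  | 0 => tta_init
  | t'.+1 => tta_step E f theta t'.+1 (tta_state_at E f theta t')
  end.

Definition switch_point (E : nat) (f : Theta -> R) (theta : nat -> Theta) (n : nat) : Prop :=
  (1 <= n)%N /\
  tta_switches E f n (tta_add (theta n) (tta_state_at E f theta n.-1)).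

Definition optimal_length (f : Theta -> R) (theta : nat -> Theta) (O : nat -> nat) : Prop :=
  forall t, (1 <= t)%N ->
    [/\ (1 <= O t <= t)%N &
        forall D, (1 <= D <= t)%N -> f (avg theta t (O t)) <= f (avg theta t D)].

Definition O_lo (E : nat) (O : nat -> nat) (n : nat) : nat := (O n %/ E * E)%N.
Definition O_up (E : nat) (O : nat -> nat) (n : nat) : nat := ((O n + E.-1) %/ E * E)%N.

End TTA.

(* Main.v *)
Require Import Defs.
From HB Require Import structures.
From mathcomp Require Import all_boot all_order all_algebra.
From mathcomp Require Import reals constructive_ereal.
From mathcomp Require Import zify.
From Stdlib Require Import Classical.
Import Order.TTheory GRing.Theory Num.Theory.

Definition upE (E x : nat) := ((x + E.-1) %/ E * E)%N.

Lemma mult_step E a b : 0 < E -> E %| a -> E %| b -> a < b -> a + E <= b.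
Proof.
move=> hE /dvdnP [p ->] /dvdnP [q ->] hlt.
rewrite ltn_pmul2r // in hlt.
by rewrite -mulSnr leq_pmul2r.
Qed.

Lemma upE_ge E x : 0 < E -> x <= upE E x.
Proof.
move=> hE; rewrite /upE.
have h1 := divn_eq (x + E.-1) E.
have h2 : (x + E.-1) %% E < E by rewrite ltn_pmod.
lia.
Qed.

Lemma upE_lt E x : 0 < E -> upE E x < x + E.
Proof.
move=> hE; rewrite /upE.
have h1 := divn_eq (x + E.-1) E.
lia.
Qed.

Lemma upE_dvd E x : E %| upE E x.
Proof. by rewrite /upE dvdn_mull. Qed.

Lemma upE_mono E x y : x <= y -> upE E x <= upE E y.
Proof. by move=> h; rewrite /upE leq_mul2r leq_div2r ?orbT // leq_add2r. Qed.

Lemma upE_le E x t : 0 < E -> E %| t -> x <= t -> upE E x <= t.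
Proof.
move=> hE ht hx; rewrite leqNgt; apply/negP => hlt.
have := mult_step _ _ _ hE ht (upE_dvd E x) hlt.
have := upE_lt E x hE. lia.
Qed.

Lemma upE_geE E x : 0 < E -> 0 < x -> E <= upE E x.
Proof.
move=> hE hx; apply: dvdn_leq; last exact: upE_dvd.
have := upE_ge E x hE. lia.
Qed.

Local Open Scope ring_scope.

Section Aux.
Variables (R : realType) (d : nat) (theta : nat -> 'rV[R]_d).

Lemma sum_avg t S : (S <= t.+1)%N ->
  S%:R *: avg theta t S = \sum_(t.+1 - S <= i < t.+1) theta i.
Proof.
move=> hS; case: S hS => [|S] hS.
  by rewrite scale0r subn0 big_geq.
rewrite /avg scalerA mulfV ?scale1r //.
by rewrite pnatr_eq0.
Qed.

Lemma avg_step t S : (S <= t)%N ->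
  avg theta t.+1 S.+1 = avg theta t S + (S.+1%:R)^-1 *: (theta t.+1 - avg theta t S).
Proof.
move=> hS.
rewrite {1}/avg subSS big_nat_recr /=; last by rewrite leq_subr.
rewrite -sum_avg; last by apply: leqW.
set A := avg theta t S; set c := S.+1%:R.
have hc : c != 0 by rewrite /c pnatr_eq0.
rewrite -{2}[A](scale1r A) -(mulVf hc) -scalerA -scalerDr.
congr (_ *: _).
rewrite mulVf // /c -[S.+1]addn1 natrD scalerDl scale1r.
by rewrite -addrA [A + _]addrC subrK.
Qed.

Lemma avg_one t : avg theta t.+1 1 = theta t.+1.
Proof. by rewrite /avg subSS subn0 big_nat1 invr1 scale1r. Qed.

End Aux.

Section Run.
Variables (R : realType) (d : nat) (theta : nat -> 'rV[R]_d).
Variables (E : nat) (f : 'rV[R]_d -> R).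

Definition Inv t (s : tta_state R d) :=
  [/\ (stS s <= stL s)%N, (stL s <= t)%N,
      (stS s = 0%N \/ stThS s = avg theta t (stS s)),
      stThL s = avg theta t (stL s) & ((E %| t - stS s)%N /\ (E %| t - stL s)%N)].

Lemma inv_add t s : Inv t s ->
  Inv t.+1 (tta_add (theta t.+1) s) /\
  stThS (tta_add (theta t.+1) s) = avg theta t.+1 (stS (tta_add (theta t.+1) s)).
Proof.
case=> h1 h2 h3 h4 [h5 h6] /=.
have hS : (stS s <= t)%N by apply: leq_trans h2.
have eS : stThS s + ((stS s).+1%:R)^-1 *: (theta t.+1 - stThS s) =
          avg theta t.+1 (stS s).+1.
  case: h3 => [->|->]; last by rewrite avg_step.
  move: (stThS s) => v.
  by rewrite invr1 scale1r addrC subrK avg_one.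
split; last by [].
split => //=; [by right | by rewrite h4 avg_step].
Qed.

Lemma inv_st t : Inv t (tta_state_at E f theta t).
Proof.
elim: t => [|t IH].
  rewrite /= /Inv /=; split => //; first by left.
  by rewrite /avg big_geq // scaler0.
rewrite /= /tta_step.
have [hI hA] := inv_add _ _ IH.
case: ifP => hsw; last by [].
case: hI => h1 h2 h3 h4 [h5 h6].
move/andP: hsw => [hdv _].
split => //=; [by apply: leq_trans h1 h2 | by left].
Qed.

End Run.

Section Run2.
Variables (R : realType) (d : nat) (theta : nat -> 'rV[R]_d).
Variables (E : nat) (f : 'rV[R]_d -> R).

Definition stt t := tta_state_at E f theta t.
Definition Pst t := tta_add (theta t) (stt t.-1).
Definition sw t := tta_switches E f t (Pst t).

Lemma st_succ t : stS (stt t.+1) = if sw t.+1 then 0%N else (stS (stt t)).+1.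
Proof. by rewrite /stt /sw /Pst /= /tta_step; case: ifP. Qed.

Lemma gap t j : (0 < E)%N -> (E %| t)%N -> (j < E)%N ->
  stS (stt (t + j)) = (stS (stt t) + j)%N.
Proof.
move=> hE ht; elim: j => [|j IH] hj; first by rewrite !addn0.
rewrite addnS st_succ.
have -> : sw (t + j).+1 = false.
  rewrite /sw /tta_switches.
  case hd: (E %| (t + j).+1)%N => //=.
  move: hd; rewrite -addnS dvdn_addr // => hd.
  have := dvdn_leq (ltn0Sn j) hd. lia.
by rewrite IH ?addnS // ltnW.
Qed.

Lemma PS_step t : (0 < E)%N -> (E %| t)%N ->
  stS (Pst (t + E)) = (stS (stt t) + E)%N.
Proof.
move=> hE ht.
have -> : (t + E = (t + E.-1).+1)%N by lia.
rewrite /Pst /= gap //; [lia | by rewrite ltn_predL].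
Qed.

Lemma Pst_inv t : (0 < t)%N -> Inv _ _ theta E t (Pst t) /\
   stThS (Pst t) = avg theta t (stS (Pst t)).
Proof.
case: t => // t _.
exact: (inv_add _ _ _ _ _ _ (inv_st _ _ theta E f t)).
Qed.

Lemma stt_eval t : (0 < t)%N -> stS (stt t) = if sw t then 0%N else stS (Pst t).
Proof. by case: t => // t _; rewrite st_succ. Qed.

End Run2.

Theorem mainTheorem3 (R : realType) (d : nat) (theta : nat -> 'rV[R]_d)
  (f : 'rV[R]_d -> R) (E : nat) (O : nat -> nat)
  (hE : (0 < E)%N)
  (hO : optimal_length f theta O)
  (A1 : forall n, (E %| n)%N -> (E <= n)%N ->
     forall i j, (i < j)%N -> (j * E <= O_lo E O n)%N ->
       (favg f theta n (j * E) < favg f theta n (i * E))%E)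
  (A2 : forall n, (E %| n)%N -> (E <= n)%N ->
     forall np, (O_up E O n <= np <= n)%N ->
       f (avg theta n (O_up E O n)) <= f (avg theta n np))
  (A3 : forall n, (E %| n)%N -> (E <= n)%N ->
     exists ns, [/\ (0 < ns)%N, (E %| ns)%N & (O (n + ns) < O n + ns)%N])
  (A4 : forall n, (E %| n)%N -> (E <= n)%N -> (O n <= O (n + E))%N) :
  forall n, (E %| n)%N -> exists ns, (n <= ns)%N /\ switch_point E f theta ns.
Proof.
move=> n hn.
have hOt t : (0 < t)%N -> (1 <= O t)%N /\ (O t <= t)%N.
  by move=> ht; case: (hO t ht) => /andP [h1 h2] _.
pose PS t := stS (Pst _ _ theta E f t).
pose PL t := stL (Pst _ _ theta E f t).
have Heval t : (0 < t)%N -> (E %| t)%N ->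
   [/\ (E %| PS t)%N, (0 < PS t)%N, (PS t <= PL t <= t)%N,
       stThS (Pst _ _ theta E f t) = avg theta t (PS t) &
       stThL (Pst _ _ theta E f t) = avg theta t (PL t)].
  move=> ht hdt.
  have [[h1 h2 h3 h4 [h5 h6]] h7] := Pst_inv _ _ theta E f t ht.
  have hpos : (0 < PS t)%N by case: t ht {h1 h2 h3 h4 h5 h6 h7 hdt} => //.
  split => //; last by rewrite /PS /PL h1 h2.
  by rewrite -(dvdn_subr (leq_trans h1 h2) hdt).
have Force t : (E <= t)%N -> (E %| t)%N -> PS t = upE E (O t) -> sw _ _ theta E f t.
  move=> hEt hdt hPS.
  have ht : (0 < t)%N by apply: leq_trans hEt.
  have [_ _ /andP [hSL hLt] hthS hthL] := Heval t ht hdt.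
  rewrite /sw /tta_switches hdt andTb hthS hthL hPS.
  apply: A2 => //.
  by rewrite -[O_up E O t]/(upE E (O t)) -hPS hSL hLt.
have Inv1 k : (0 < k)%N -> (PS (k * E) <= upE E (O (k * E)))%N.
  elim: k => [//|k IH] _.
  case: k IH => [|k] IH.
    rewrite mul1n /PS -[E]add0n PS_step // add0n.
    by apply: upE_geE => //; case: (hOt E hE).
  set t := (k.+1 * E)%N in IH *.
  have htE : (E <= t)%N by rewrite /t leq_pmull.
  have ht : (0 < t)%N by apply: leq_trans htE.
  have hdt : (E %| t)%N by rewrite /t dvdn_mull.
  rewrite mulSnr -/t /PS PS_step // stt_eval //.
  case hs: (sw _ _ theta E f t).
    by rewrite add0n; apply: upE_geE => //; case: (hOt (t + E)%N); lia.
  have IH' := IH erefl.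
  have hne : PS t != upE E (O t).
    by apply/eqP => heq; rewrite (Force t htE hdt heq) in hs.
  have hlt : (PS t < upE E (O t))%N by rewrite ltn_neqAle hne IH'.
  have [hd1 _ _ _ _] := Heval t ht hdt.
  apply: leq_trans (mult_step _ _ _ hE hd1 (upE_dvd E (O t)) hlt) _.
  by apply: upE_mono; apply: A4.
case: (classic (exists ns, (n <= ns)%N /\ switch_point E f theta ns)) => // H.
exfalso.
have NoSw u : (n <= u)%N -> (0 < u)%N -> sw _ _ theta E f u = false.
  move=> hnu hu; apply/negP => hs; apply: H; exists u; split => //.
have hn' : n = (n %/ E * E)%N by rewrite divnK.
set k0 := (n %/ E).+1.
set t0 := (k0 * E)%N.
have hk0 j : (n <= (k0 + j) * E)%N /\ (E <= (k0 + j) * E)%N /\ (E %| (k0 + j) * E)%N.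
  split; last split; last by rewrite dvdn_mull.
    rewrite {1}hn' mulnDl /k0 mulSnr; lia.
  by rewrite leq_pmull // addSn.
have C j : PS ((k0 + j) * E)%N = (PS t0 + j * E)%N.
  elim: j => [|j IH]; first by rewrite addn0 mul0n addn0.
  have [h1 [h2 h3]] := hk0 j.
  have hp : (0 < (k0 + j) * E)%N by apply: leq_trans h2.
  rewrite addnS mulSnr /PS PS_step // stt_eval // NoSw //.
  by rewrite -/(PS ((k0 + j) * E)%N) IH mulSnr addnA.
have Bound j : ((k0 + j) * E < O ((k0 + j) * E) + E + t0)%N.
  have [h1 [h2 h3]] := hk0 j.
  have hp : (0 < k0 + j)%N by rewrite addSn.
  have := Inv1 _ hp.
  have := upE_lt E (O ((k0 + j) * E)%N) hE.
  rewrite C mulnDl -/t0 /PS; lia.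
have Iter m : exists j, (m + O ((k0 + j) * E) <= (k0 + j) * E)%N.
  elim: m => [|m [j hj]].
    exists 0%N; have [h1 [h2 h3]] := hk0 0%N.
    by rewrite add0n; case: (hOt ((k0 + 0) * E)%N); [apply: leq_trans h2|].
  have [h1 [h2 h3]] := hk0 j.
  have [ns [hns1 hns2 hns3]] := A3 _ h3 h2.
  case/dvdnP: hns2 => q hq.
  exists (j + q)%N.
  rewrite addnA mulnDl -hq.
  lia.
have [j hj] := Iter (E + t0)%N.
have := Bound j. lia.
Qed.
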